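(* Let $\lambda>0$ and $\alpha_1,\dots,\alpha_n,\alpha^*_1,\dots,\alpha^*_n>0$. Let $X_1,\dots,X_n$ be mutually independent with $X_i\sim\mathrm{GE}(\alpha_i,\lambda)$ and $X^*_1,\dots,X^*_n$ mutually independent with $X^*_i\sim\mathrm{GE}(\alpha^*_i,\lambda)$. If $\sum_{i=1}^{j}\alpha^*_{(i)}\ge\sum_{i=1}^{j}\alpha_{(i)}$ for all $j=1,\dots,n$, then $X_{1:n}\le_{\rm hr}X^*_{1:n}$.
   Context: $X\sim\mathrm{GE}(\alpha,\lambda)$ (generalized exponential) means $X$ has distribution function $(1-e^{-\lambda x})^{\alpha}$, $x>0$. $X_{1:n}=\min_i X_i$. $\alpha_{(1)}\le\dots\le\alpha_{(n)}$ are the components in increasing order. $X\le_{\rm hr}Y$ means the hazard rate of $X$ is pointwise $\ge$ that of $Y$. *)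

(* Defs.v *)
From HB Require Import structures.
From mathcomp Require Import all_boot all_order all_algebra.
From mathcomp Require Import all_classical all_reals all_analysis.
Set Implicit Arguments. Unset Strict Implicit. Unset Printing Implicit Defensive.
Import Order.TTheory GRing.Theory Num.Theory.
Local Open Scope classical_set_scope.
Local Open Scope ring_scope.

Definition GE_cdf {R : realType} (a l : R) (x : R) : R :=
  if x <= 0 then 0 else (1 - expR (- (l * x))) `^ a.

(* Mutual independence of a finite family of real random variables:
   product rule for all Borel sets (taking B i = setT gives every subfamily). *)
Definition mutually_independent {d} {T : measurableType d} {R : realType}
  (P : probability T R) (k : nat) (X : 'I_k -> T -> R) : Prop :=
  forall B : 'I_k -> set R, (forall i, measurable (B i)) ->
    fine (P (\bigcap_(i in [set: 'I_k]) (X i @^-1` B i)))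
    = \prod_(i < k) fine (P (X i @^-1` B i)).

Definition has_GE_law {d} {T : measurableType d} {R : realType}
  (P : probability T R) (Y : T -> R) (a l : R) : Prop :=
  forall x : R, P [set w | Y w <= x] = (GE_cdf a l x)%:E.

Definition minRV {T} {R : realType} (n : nat) (X : 'I_n.+1 -> T -> R) : T -> R :=
  fun w => \big[Num.min/X ord0 w]_(i < n.+1) X i w.

Definition survival {d} {T : measurableType d} {R : realType}
  (P : probability T R) (Y : T -> R) (x : R) : R :=
  fine (P [set w | x < Y w]).

Definition hazard {d} {T : measurableType d} {R : realType}
  (P : probability T R) (Y : T -> R) (x : R) : R :=
  - (derive1 (survival P Y) x) / survival P Y x.

Definition hr_le {d} {T : measurableType d} {R : realType}
  (P : probability T R) (Y1 Y2 : T -> R) : Prop :=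
  forall x : R, 0 < x -> hazard P Y2 x <= hazard P Y1 x.

(* Components of a vector sorted increasingly: sorted_comp a i = a_(i+1). *)
Definition sorted_comp {R : realType} (n : nat) (a : 'I_n -> R) : seq R :=
  sort <=%R [seq a i | i <- enum 'I_n].

(* Main.v *)
Require Import Defs.
From HB Require Import structures.
From mathcomp Require Import all_boot all_order all_algebra.
From mathcomp Require Import all_classical all_reals all_analysis.
From mathcomp Require Import ring lra.
Import Order.TTheory GRing.Theory Num.Theory.
Local Open Scope classical_set_scope.
Local Open Scope ring_scope.

Section Psi.
Context {R : realType}.
Definition psi (y : R) := y / (expR y - 1).
Definition gpsi (y : R) := (expR y - 1 - y * expR y) / (expR y - 1) ^+ 2.

Lemma expRm1_gt0 (y : R) : 0 < y -> 0 < expR y - 1.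
Proof. by move=> y0; rewrite subr_gt0 expR_gt1. Qed.

Lemma is_derive_psi (y : R) : 0 < y -> is_derive y 1 psi (gpsi y).
Proof.
move=> y0.
have h1 : is_derive y 1 (fun z : R => expR z - 1) (expR y).
  have := is_deriveB (is_derive_expR y) (@is_derive_cst _ R^o R^o 1 y 1).
  by rewrite subr0.
have h2 := @is_deriveV _ (fun z : R => expR z - 1) y _ _ (lt0r_neq0 (expRm1_gt0 y y0)) h1.
have h3 := is_deriveM (@is_derive_id _ _ y 1) h2.
have -> : psi = (id * (fun y0 => (expR y0 - 1)^-1)) by apply: funext.
apply: (is_derive_eq h3).
rewrite /gpsi; rewrite -[in LHS]/(_ * (_ * _) + _ * 1). have := expRm1_gt0 y y0. move=> hp.
change (y * (- (expR y - 1) ^- 2 * expR y) + (expR y - 1)^-1 * 1 = (expR y - 1 - y * expR y) / (expR y - 1) ^+ 2). field. by rewrite gt_eqF.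
Qed.

Lemma mono_deriv (f f' : R -> R) (a b : R) : a <= b ->
  (forall x, a <= x <= b -> is_derive x 1 f (f' x)) ->
  (forall x, a < x < b -> 0 <= f' x) -> f a <= f b.
Proof.
move=> ab df dpos.
apply: (@ger0_derive1_le_cc R f a b).
- move=> x; rewrite in_itv /= => /andP[ax xb].
  by have [] := df x; rewrite ?(ltW ax) ?(ltW xb).
- move=> x; rewrite in_itv /= => /andP[ax xb].
  have hd := df x; rewrite ?(ltW ax) ?(ltW xb) in hd.
  by rewrite derive1E (@derive_val _ _ _ _ _ _ _ (hd isT)); apply: dpos; rewrite ax xb.
- apply: derivable_within_continuous => x; rewrite in_itv /= => hx.
  by have [] := df x hx.
- by rewrite in_itv /= lexx ab.
- by rewrite in_itv /= lexx ab.
- exact: ab.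
Qed.

Definition kpsi (y : R) := (y - 2) * expR y + y + 2.
Definition dgpsi (y : R) := expR y * kpsi y / (expR y - 1) ^+ 3.

Lemma is_derive_expm1 (y : R) : is_derive y 1 (fun z : R => expR z - 1) (expR y).
Proof.
have := is_deriveB (is_derive_expR y) (@is_derive_cst _ R^o R^o 1 y 1).
by rewrite subr0.
Qed.

Lemma is_derive_gpsi (y : R) : 0 < y -> is_derive y 1 gpsi (dgpsi y).
Proof.
move=> y0.
have hp := expRm1_gt0 y y0.
have h1 := is_derive_expm1 y.
have hN : is_derive y 1 (fun z : R => expR z - 1 - z * expR z) (- (y * expR y)).
  have hm := is_deriveM (@is_derive_id _ _ y 1) (is_derive_expR y).
  have := is_deriveB h1 hm.
  have -> : (fun z : R => expR z - 1) - id * expR = (fun z : R => expR z - 1 - z * expR z) by [].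
  move=> H; apply: (is_derive_eq H).
  change (expR y - (y * expR y + expR y * 1) = - (y * expR y)). ring.
have hD := is_deriveX 2 h1.
have hV := @is_deriveV _ ((fun z : R => expR z - 1) ^+ 2) y _ _ _ hD.
have hV' : ((fun z : R => expR z - 1) ^+ 2) y != 0.
  rewrite /= expr2 mulf_neq0 // gt_eqF //.
have hM := is_deriveM hN (hV hV').
have -> : gpsi = (fun z : R => expR z - 1 - z * expR z) * (fun y0 => (((fun z : R => expR z - 1) ^+ 2) y0)^-1).
  by apply: funext => z; rewrite /gpsi /= expr2.
apply: (is_derive_eq hM).
rewrite /dgpsi /kpsi /=.
have E : ((fun z : R => expR z - 1) ^+ 2) y = (expR y - 1)^+2 by rewrite /= expr2.
have sc : forall a b : R, a *: b = a * b := fun _ _ => erefl.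
rewrite E !sc /=.
field. by rewrite gt_eqF.
Qed.

Lemma expR_aux (x : R) : expR x - x * expR x <= 1.
Proof.
have h := expR_ge1Dx (- x).
have e : expR (- x) * expR x = 1 by rewrite expRN mulVf // gt_eqF // expR_gt0.
have hx := expR_gt0 x.
have : (1 + - x) * expR x <= expR (- x) * expR x by rewrite ler_pM2r.
rewrite e; lra.
Qed.

Lemma kpsi_ge0 (y : R) : 0 <= y -> 0 <= kpsi y.
Proof.
move=> y0.
have -> : 0 = kpsi 0 by rewrite /kpsi expR0; ring.
apply: (@mono_deriv kpsi (fun x => (x - 1) * expR x + 1)) => // x _.
  have hm := is_deriveM (is_deriveB (@is_derive_id _ R^o x 1) (@is_derive_cst _ R^o R^o 2 x 1)) (is_derive_expR x).
  have hs := is_deriveD (is_deriveD hm (@is_derive_id _ R^o x 1)) (@is_derive_cst _ R^o R^o 2 x 1).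
  have -> : kpsi = (id - cst 2) * expR + id + cst 2 by [].
  apply: (is_derive_eq hs).
  have sc : forall a b : R, a *: b = a * b := fun _ _ => erefl.
  rewrite !sc; change ((x - 2) * expR x + expR x * (1 - 0) + 1 + 0 = (x - 1) * expR x + 1); ring.
have := expR_aux x; lra.
Qed.

Lemma dgpsi_ge0 (y : R) : 0 < y -> 0 <= dgpsi y.
Proof.
move=> y0; rewrite /dgpsi; apply: divr_ge0.
  by apply: mulr_ge0; [exact: expR_ge0 | apply: kpsi_ge0; exact: ltW].
by apply: exprn_ge0; apply: ltW; apply: expRm1_gt0.
Qed.

Lemma gpsi_mono (z y : R) : 0 < z -> z <= y -> gpsi z <= gpsi y.
Proof.
move=> z0 zy; apply: (@mono_deriv gpsi dgpsi) => // x /andP[zx _].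
  by apply: is_derive_gpsi; apply: lt_le_trans z0 zx.
by apply: dgpsi_ge0; exact: lt_trans zx.
Qed.

Lemma gpsi_le0 (y : R) : 0 < y -> gpsi y <= 0.
Proof.
move=> y0; rewrite /gpsi; apply: mulr_le0_ge0.
  by have := expR_aux y; lra.
by rewrite invr_ge0; apply: exprn_ge0; apply: ltW; apply: expRm1_gt0.
Qed.

Lemma psi_tangent (z y : R) : 0 < z -> 0 < y -> psi z + gpsi z * (y - z) <= psi y.
Proof.
move=> z0 y0.
have hd : forall t : R, 0 < t -> is_derive t 1 (fun t => psi t - gpsi z * t) (gpsi t - gpsi z).
  move=> t t0.
  have h := is_deriveB (is_derive_psi t t0) (is_deriveZ (gpsi z) (@is_derive_id _ R^o t 1)).
  apply: (is_derive_eq h).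
  have sc : forall a b : R, a *: b = a * b := fun _ _ => erefl.
  by rewrite !sc mulr1.
have [zy|yz] := lerP z y.
  have := @mono_deriv (fun t => psi t - gpsi z * t) (fun t => gpsi t - gpsi z) z y zy.
  move=> H; have {}H : psi z - gpsi z * z <= psi y - gpsi z * y.
    apply: H => x /andP[zx _].
      by apply: hd; exact: lt_le_trans z0 zx.
    by rewrite subr_ge0; apply: gpsi_mono => //; exact: ltW.
  lra.
have := @mono_deriv (fun t => - (psi t - gpsi z * t)) (fun t => - (gpsi t - gpsi z)) y z (ltW yz).
move=> H; have {}H : - (psi y - gpsi z * y) <= - (psi z - gpsi z * z).
  apply: H => x /andP[yx xz].
    by apply: is_deriveN; apply: hd; exact: lt_le_trans y0 yx.
  rewrite oppr_ge0 subr_le0; apply: gpsi_mono => //.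
  exact: lt_trans y0 yx.
  exact: ltW.
lra.
Qed.
End Psi.
Section Abel.
Context {R : realType}.
Lemma abel_id (d e : nat -> R) (m : nat) :
  \sum_(i < m.+1) d i * e i =
  d m * (\sum_(i < m.+1) e i) - \sum_(i < m) (d i.+1 - d i) * (\sum_(l < i.+1) e l).
Proof.
elim: m => [|m IH]; first by rewrite !big_ord1 big_ord0 subr0.
rewrite big_ord_recr IH /=.
rewrite [\sum_(i < m.+1) (d i.+1 - d i) * _]big_ord_recr /=.
rewrite [\sum_(i < m.+2) e i]big_ord_recr /=.
ring.
Qed.

Lemma abel (d e : nat -> R) (k : nat) :
  (forall i, (i.+1 < k)%N -> d i <= d i.+1) -> (0 < k)%N -> d k.-1 <= 0 ->
  (forall j, (1 <= j <= k)%N -> \sum_(i < j) e i <= 0) ->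
  0 <= \sum_(i < k) d i * e i.
Proof.
case: k => // m dmono _ dle0 Ele0.
rewrite abel_id subr_ge0.
apply: (@le_trans _ _ 0).
  rewrite -oppr_ge0 -sumrN; apply: sumr_ge0 => i _; rewrite oppr_ge0.
  apply: mulr_ge0_le0.
    by rewrite subr_ge0; apply: dmono; rewrite ltnS.
  by apply: Ele0; rewrite /= ltnS ltnW.
by apply: mulr_le0 => //; apply: Ele0; rewrite /= leqnn.
Qed.
End Abel.

Section Major.
Context {R : realType}.
Lemma major (c : R) (a b : nat -> R) (k : nat) : 0 < c -> (0 < k)%N ->
  (forall i, (i < k)%N -> 0 < a i) -> (forall i, (i < k)%N -> 0 < b i) ->
  (forall i, (i.+1 < k)%N -> b i <= b i.+1) ->
  (forall j, (1 <= j <= k)%N -> \sum_(i < j) a i <= \sum_(i < j) b i) ->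
  \sum_(i < k) psi (c * b i) <= \sum_(i < k) psi (c * a i).
Proof.
move=> c0 k0 apos bpos bmono hsum.
have H := @abel R (fun i => gpsi (c * b i)) (fun i => c * (a i - b i)) k.
have {H} H : 0 <= \sum_(i < k) gpsi (c * b i) * (c * (a i - b i)).
  apply: H => //.
  - move=> i ik; apply: gpsi_mono.
      by apply: mulr_gt0 => //; apply: bpos; exact: ltnW.
    by rewrite ler_pM2l //; apply: bmono.
  - apply: gpsi_le0; apply: mulr_gt0 => //; apply: bpos.
    by rewrite ltn_predL.
  - move=> j hj; rewrite -mulr_sumr; apply: mulr_ge0_le0; first exact: ltW.
    rewrite sumrB subr_le0; exact: hsum.
rewrite -subr_ge0 -sumrB; apply: (le_trans H); apply: ler_sum => i _.
have hi := ltn_ord i.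
have := @psi_tangent R (c * b i) (c * a i).
rewrite !mulr_gt0 // ?apos ?bpos // => /(_ isT isT) h.
rewrite mulrBr in h.
lra.
Qed.
End Major.
Section Prob.
Context {R : realType} {d : measure_display} {T : measurableType d} (P : probability T R).

Lemma survival_GE (Y : {RV P >-> R}) a l x :
  has_GE_law P Y a l -> survival P Y x = 1 - GE_cdf a l x.
Proof.
move=> h; rewrite /survival.
have -> : [set w | x < Y w] = ~` [set w | Y w <= x].
  apply: funext => w /=; rewrite /setC /= ltNge; apply/propext; split.
    by move=> /negP.
  by move=> /negP.
rewrite probability_setC; last first.
  have -> : [set w | Y w <= x] = Y @^-1` `]-oo, x]%classic.
    by apply: funext => w /=; rewrite in_itv /=.
  exact: measurable_funPTI.
by rewrite h.
Qed.

Lemma survival_min (n : nat) (X : 'I_n.+1 -> {RV P >-> R}) x :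
  mutually_independent P (fun i => (X i : T -> R)) ->
  survival P (minRV (fun i => (X i : T -> R))) x = \prod_(i < n.+1) survival P (X i) x.
Proof.
move=> hind; rewrite /survival.
have E : [set w | x < minRV (fun i => (X i : T -> R)) w] =
    \bigcap_(i in [set: 'I_n.+1]) ((X i : T -> R) @^-1` `]x, +oo[%classic).
  apply/seteqP; split => w /=.
    move=> /bigmin_gtP [_ h] i _ /=; rewrite in_itv /= andbT; exact: h.
  move=> h; apply/bigmin_gtP; split.
    by have := h ord0 I; rewrite /= in_itv /= andbT.
  by move=> i _; have := h i I; rewrite /= in_itv /= andbT.
rewrite E (hind (fun _ => `]x, +oo[%classic)); last by move=> i; exact: measurable_itv.
apply: eq_bigr => i _; congr fine; congr (P _).
by apply/seteqP; split => w /=; rewrite in_itv /= andbT.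
Qed.
End Prob.
Section Deriv.
Context {R : realType}.

Lemma is_derive_prod (I : Type) (s : seq I) (g : I -> R -> R) (dg : I -> R) (x : R) :
  (forall i, is_derive x 1 (g i) (dg i)) -> (forall i, g i x != 0) ->
  is_derive x 1 (fun y => \prod_(i <- s) g i y)
    ((\prod_(i <- s) g i x) * \sum_(i <- s) dg i / g i x).
Proof.
move=> hd hnz; elim: s => [|a s IH].
  have -> : (fun y : R => \prod_(i <- [::]) g i y) = cst 1.
    by apply: funext => y; rewrite big_nil.
  by rewrite big_nil mul1r big_nil; exact: (@is_derive_cst _ R^o R^o 1 x 1).
have -> : (fun y : R => \prod_(i <- a :: s) g i y) = g a * (fun y => \prod_(i <- s) g i y).
  by apply: funext => y; rewrite big_cons.
apply: (is_derive_eq (is_deriveM (hd a) IH)).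
have sc : forall a b : R, a *: b = a * b := fun _ _ => erefl.
rewrite !sc !big_cons /=.
have := hnz a; move=> ha.
field. exact: ha.
Qed.

Definition Lf (lam y : R) := ln (1 - expR (- (lam * y))).
Definition dLf (lam y : R) := lam * expR (- (lam * y)) / (1 - expR (- (lam * y))).

Lemma u_bounds {lam y : R} : 0 < lam -> 0 < y ->
  0 < 1 - expR (- (lam * y)) < 1.
Proof.
move=> l0 y0; have := expR_gt0 (- (lam * y)).
have : expR (- (lam * y)) < 1 by rewrite expR_lt1 oppr_lt0 mulr_gt0.
move=> h1 h2; apply/andP; split; lra.
Qed.

Lemma is_derive_Lf {lam y : R} : 0 < lam -> 0 < y -> is_derive y 1 (Lf lam) (dLf lam y).
Proof.
move=> l0 y0.
have /andP[u0 u1] := u_bounds l0 y0.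
have hin : is_derive y 1 (fun z : R => - (lam * z)) (- lam).
  have := is_deriveN (is_deriveZ lam (@is_derive_id _ R^o y 1)).
  have sc : forall a b : R, a *: b = a * b := fun _ _ => erefl.
  by rewrite sc mulr1.
have he := @is_derive1_comp _ expR (fun z : R => - (lam * z)) y _ _ (is_derive_expR (- (lam * y))) hin.
have hu := is_deriveB (@is_derive_cst _ R^o R^o 1 y 1) he.
have hl := @is_derive1_comp _ (@ln R) (cst 1 - expR \o (fun z : R => - (lam * z))) y _ _ (is_derive1_ln u0) hu.
have -> : Lf lam = (@ln R) \o (cst 1 - expR \o (fun z : R => - (lam * z))) by [].
apply: (is_derive_eq hl).
rewrite /dLf /=. change ((1 - expR (- (lam * y)))^-1 * (0 - expR (- (lam * y)) * - lam) = lam * expR (- (lam * y)) / (1 - expR (- (lam * y)))).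
field. by rewrite gt_eqF.
Qed.

Lemma is_derive_ei (a lam y : R) : 0 < lam -> 0 < y ->
  is_derive y 1 (fun z => 1 - expR (a * Lf lam z)) (- (expR (a * Lf lam y) * (a * dLf lam y))).
Proof.
move=> l0 y0.
have h1 := is_deriveZ a (is_derive_Lf l0 y0).
have h2 := @is_derive1_comp _ expR (a *: Lf lam) y _ _ (is_derive_expR (a * Lf lam y)) h1.
have h3 := is_deriveB (@is_derive_cst _ R^o R^o 1 y 1) h2.
have -> : (fun z => 1 - expR (a * Lf lam z)) = cst 1 - expR \o (a *: Lf lam) by [].
apply: (is_derive_eq h3).
have sc : forall a b : R, a *: b = a * b := fun _ _ => erefl.
by rewrite sc sub0r.
Qed.

Lemma term_eq (a L D : R) : L < 0 -> 0 < a ->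
  - (- (expR (a * L) * (a * D)) / (1 - expR (a * L))) = (D / (- L)) * psi ((- L) * a).
Proof.
move=> L0 a0.
have -> : a * L = - ((- L) * a) by ring.
rewrite expRN /psi.
have hE : 1 < expR (- L * a) by rewrite expR_gt1 mulr_gt0 // oppr_gt0.
have E0 : expR (- L * a) != 0 by rewrite gt_eqF // expR_gt0.
have E1 : expR (- L * a) - 1 != 0 by rewrite gt_eqF // subr_gt0.
have L0' : L != 0 by rewrite lt_eqF.
field.
by rewrite E1 L0' E0.
Qed.
End Deriv.
Section Sorted.
Context {R : realType}.
Lemma size_sorted_comp k (a : 'I_k -> R) : size (sorted_comp a) = k.
Proof. by rewrite /sorted_comp size_sort size_map size_enum_ord. Qed.

Lemma sum_sorted_comp k (a : 'I_k -> R) (F : R -> R) :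
  \sum_(i < k) F (a i) = \sum_(i < k) F ((sorted_comp a)`_i).
Proof.
transitivity (\sum_(x <- sorted_comp a) F x).
  rewrite /sorted_comp (perm_big _ (permEl (perm_sort _ _))) big_map.
  by rewrite big_enum.
rewrite (big_nth 0) size_sorted_comp big_mkord //.
Qed.

Lemma sorted_comp_mono k (a : 'I_k -> R) i : (i.+1 < k)%N ->
  (sorted_comp a)`_i <= (sorted_comp a)`_i.+1.
Proof.
move=> ik.
have hs : sorted <=%R (sorted_comp a) by apply: sort_sorted; exact: le_total.
apply: (sorted_leq_nth le_trans lexx 0 hs); rewrite ?inE ?size_sorted_comp //.
exact: ltnW.
Qed.

Lemma sorted_comp_pos k (a : 'I_k -> R) : (forall j, 0 < a j) ->
  forall i, (i < k)%N -> 0 < (sorted_comp a)`_i.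
Proof.
move=> apos i ik.
have : (sorted_comp a)`_i \in sorted_comp a by apply: mem_nth; rewrite size_sorted_comp.
by rewrite mem_sort => /mapP [j _ ->].
Qed.
End Sorted.

Section Main.
Context {R : realType} {d : measure_display} {T : measurableType d} (P : probability T R).

Lemma surv_formula {n : nat} {lam : R} {alpha : 'I_n.+1 -> R} {X : 'I_n.+1 -> {RV P >-> R}} :
  0 < lam -> mutually_independent P (fun i => (X i : T -> R)) ->
  (forall i, has_GE_law P (X i) (alpha i) lam) ->
  forall y, 0 < y -> survival P (minRV (fun i => (X i : T -> R))) y =
    \prod_(i < n.+1) (1 - expR (alpha i * Lf lam y)).
Proof.
move=> l0 hind hlaw y y0; rewrite survival_min //; apply: eq_bigr => i _.
have /andP[u0 _] := u_bounds l0 y0.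
by rewrite (@survival_GE _ _ _ P (X i) (alpha i) lam y (hlaw i)) /GE_cdf leNgt y0 /= /powR gt_eqF.
Qed.

Lemma hazard_formula {n : nat} {lam : R} {alpha : 'I_n.+1 -> R} {X : 'I_n.+1 -> {RV P >-> R}} {x : R} :
  0 < lam -> (forall i, 0 < alpha i) -> mutually_independent P (fun i => (X i : T -> R)) ->
  (forall i, has_GE_law P (X i) (alpha i) lam) -> 0 < x ->
  hazard P (minRV (fun i => (X i : T -> R))) x =
    (dLf lam x / (- Lf lam x)) * \sum_(i < n.+1) psi ((- Lf lam x) * alpha i).
Proof.
move=> l0 apos hind hlaw x0.
have hs := surv_formula l0 hind hlaw.
have /andP[u0 u1] := u_bounds l0 x0.
have hL : Lf lam x < 0 by apply: ln_lt0; rewrite u0 u1.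
have hnz : forall i, (fun i z => 1 - expR (alpha i * Lf lam z)) i x != 0.
  move=> i /=; rewrite subr_eq0 eq_sym; apply/negP => /eqP.
  move/(congr1 (@ln R)); rewrite expRK ln1 => /eqP.
  by rewrite mulf_eq0 (gt_eqF (apos i)) (lt_eqF hL).
have hF := @is_derive_prod R _ (index_enum 'I_n.+1) (fun i z => 1 - expR (alpha i * Lf lam z))
  (fun i => - (expR (alpha i * Lf lam x) * (alpha i * dLf lam x))) x
  (fun i => is_derive_ei (alpha i) lam x l0 x0) hnz.
rewrite /hazard derive1E.
rewrite (@near_eq_derive _ _ _ _ (fun y => \prod_(i < n.+1) (1 - expR (alpha i * Lf lam y)))); last first.
  near=> y; apply: hs; near: y; exact: lt_nbhsr.
rewrite (@derive_val _ _ _ _ _ _ _ hF) (hs x x0).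
have hP : \prod_(i < n.+1) (1 - expR (alpha i * Lf lam x)) != 0.
  by apply/prodf_neq0 => i _; exact: hnz.
set A := \prod_(i < n.+1) _ in hP *.
set B := \sum_(i < n.+1) _.
have -> : - (A * B) / A = - B by field.
rewrite -sumrN mulr_sumr; apply: eq_bigr => i _.
exact: term_eq.
Unshelve. all: by end_near.
Qed.
End Main.

Theorem mainTheorem11 (R : realType) (d : measure_display) (T : measurableType d)
  (P : probability T R) (n : nat) (lam : R) (alpha alphas : 'I_n.+1 -> R)
  (X Xs : 'I_n.+1 -> {RV P >-> R}) :
  0 < lam ->
  (forall i, 0 < alpha i) -> (forall i, 0 < alphas i) ->
  mutually_independent P (fun i => (X i : T -> R)) ->
  mutually_independent P (fun i => (Xs i : T -> R)) ->
  (forall i, has_GE_law P (X i) (alpha i) lam) ->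
  (forall i, has_GE_law P (Xs i) (alphas i) lam) ->
  (forall j : nat, (1 <= j <= n.+1)%N ->
     \sum_(i < j) (sorted_comp alpha)`_i <= \sum_(i < j) (sorted_comp alphas)`_i) ->
  hr_le P (minRV (fun i => (X i : T -> R))) (minRV (fun i => (Xs i : T -> R))).
Proof.
move=> l0 apos aspos hX hXs lawX lawXs hmaj x x0.
rewrite (hazard_formula P l0 apos hX lawX x0) (hazard_formula P l0 aspos hXs lawXs x0).
have /andP[u0 u1] := u_bounds l0 x0.
have hL : Lf lam x < 0 by apply: ln_lt0; rewrite u0 u1.
have hc : 0 < - Lf lam x by rewrite oppr_gt0.
apply: ler_wpM2l.
  apply: divr_ge0; last exact: ltW.
  rewrite /dLf; apply: divr_ge0; last exact: ltW.
  by apply: mulr_ge0; [exact: ltW | exact: expR_ge0].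
rewrite (sum_sorted_comp n.+1 alpha (fun a => psi (- Lf lam x * a))).
rewrite (sum_sorted_comp n.+1 alphas (fun a => psi (- Lf lam x * a))).
apply: major => //.
- by move=> i; apply: sorted_comp_pos.
- by move=> i; apply: sorted_comp_pos.
- by move=> i; apply: sorted_comp_mono.
Qed.
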